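(* Let $\beta=(\beta_n)_{n\ge0}$ be an essentially decreasing sequence of positive numbers with $\liminf_n\beta_n^{1/n}\ge1$, and assume that for some $a\in(0,1)$ the map $T_a$ induces a bounded composition operator on $H^2(\beta)$. Then $\beta$ satisfies the $\Delta_2$-condition.
   Context: $H^2(\beta)$ is the Hilbert space of analytic functions $f(z)=\sum_{n\ge0}a_nz^n$ on the unit disk $\mathbb D$ with $\|f\|^2=\sum_{n\ge0}|a_n|^2\beta_n<\infty$. $T_a(z)=\frac{a+z}{1+\bar a z}$ and $C_{T_a}f=f\circ T_a$. $\beta$ is essentially decreasing if there is $C\ge1$ with $\beta_m\le C\beta_n$ for all $m\ge n\ge0$. $\beta$ satisfies the $\Delta_2$-condition if there is $\delta\in(0,1)$ with $\beta_{2n}\ge\delta\beta_n$ for all $n\ge0$. *)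

(* Defs.v *)
From Stdlib Require Import Reals.
From Coquelicot Require Import Coquelicot.
Open Scope R_scope.

(* An element of H^2(beta) is represented by its Taylor coefficient sequence. *)
Definition in_H2 (beta : nat -> R) (c : nat -> C) : Prop :=
  ex_series (fun n => (Cmod (c n)) ^ 2 * beta n).

Definition H2norm2 (beta : nat -> R) (c : nat -> C) : R :=
  Series (fun n => (Cmod (c n)) ^ 2 * beta n).

Definition pseries_C (c : nat -> C) (w s : C) : Prop :=
  @is_series C_AbsRing C_NormedModule (fun n => Cmult (c n) (pow_n w n)) s.

Definition T_map (a : C) (z : C) : C :=
  Cdiv (Cplus a z) (Cplus 1 (Cmult (Cconj a) z)).

Definition ess_decreasing (beta : nat -> R) : Prop :=
  exists K : R, 1 <= K /\ forall m n : nat, (n <= m)%nat -> beta m <= K * beta n.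

Definition Delta2 (beta : nat -> R) : Prop :=
  exists delta : R, 0 < delta < 1 /\ forall n : nat, beta (2 * n)%nat >= delta * beta n.

(* C_{T_a} is a bounded operator on H^2(beta): for every f in H^2(beta),
   f o T_a is (on the unit disk) the analytic function of some g in H^2(beta),
   and ||f o T_a|| <= M ||f||. *)
Definition bounded_comp (beta : nat -> R) (a : C) : Prop :=
  exists M : R, 0 <= M /\
    forall c : nat -> C, in_H2 beta c ->
      exists d : nat -> C, in_H2 beta d /\
        (forall z : C, Cmod z < 1 ->
           exists s : C, pseries_C c (T_map a z) s /\ pseries_C d z s) /\
        H2norm2 beta d <= M * H2norm2 beta c.

(* Main.v *)
Require Import Defs.
From Stdlib Require Import Reals Lra Lia Psatz.
From Coquelicot Require Import Coquelicot.
Open Scope R_scope.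

Lemma is_series_zero : is_series (fun _ : nat => 0) 0.
Proof.
  unfold is_series.
  apply filterlim_ext with (fun _ => 0).
  - intro n. rewrite sum_n_const. simpl; ring.
  - apply filterlim_const.
Qed.

Lemma is_series_ind (N : nat) (c : R) :
  is_series (fun m => if (m <? N)%nat then c else 0) (INR N * c).
Proof.
  destruct N as [|N'].
  - simpl. replace (0 * c) with 0 by ring.
    eapply is_series_ext; [|apply is_series_zero].
    intro n. destruct n; reflexivity.
  - apply is_series_decr_n with (n := S N'); [lia|].
    assert (Hs : sum_n (fun m : nat => if (m <? S N')%nat then c else 0) (Init.Nat.pred (S N'))
      = INR (S N') * c).
    { simpl pred. rewrite (sum_n_ext_loc _ (fun _ => c)).
      + rewrite sum_n_const. reflexivity.
      + intros n Hn. destruct (Nat.ltb_spec n (S N')); [reflexivity|lia]. }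
    simpl pred in Hs |- *.
    match goal with |- is_series _ ?l => replace l with 0 end.
    2:{ match goal with |- _ = plus _ (opp ?S) => set (S0 := S) end.
        assert (HS0 : S0 = INR (S N') * c) by exact Hs.
        rewrite HS0. change (0 = INR (S N') * c + - (INR (S N') * c)). ring. }
    eapply is_series_ext; [|apply is_series_zero].
    intro k. simpl. destruct (Nat.ltb_spec (S (N' + k)) (S N')); [lia|reflexivity].
Qed.

Lemma Series_ind (N : nat) (c : R) :
  Series (fun m => if (m <? N)%nat then c else 0) = INR N * c.
Proof. apply is_series_unique, is_series_ind. Qed.

Lemma ex_series_ind (N : nat) (c : R) :
  ex_series (fun m => if (m <? N)%nat then c else 0).
Proof. eexists; apply is_series_ind. Qed.

Lemma pow_le_mono (x : R) (n m : nat) : 0 <= x <= 1 -> (n <= m)%nat -> x ^ m <= x ^ n.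
Proof.
  intros Hx Hnm. replace m with (n + (m - n))%nat by lia.
  rewrite pow_add.
  assert (0 <= x ^ n) by (apply pow_le; lra).
  assert (x ^ (m - n) <= 1) by (rewrite <- (pow1 (m - n)); apply pow_incr; lra).
  nra.
Qed.

Lemma ex_series_Rscal (c : R) (a : nat -> R) : ex_series a -> ex_series (fun n => c * a n).
Proof.
  intro H. apply (ex_series_ext (fun n => scal c (a n))). intro; reflexivity.
  exact (@ex_series_scal_l R_AbsRing R_NormedModule c a H).
Qed.

Lemma ex_series_Rplus (a b : nat -> R) : ex_series a -> ex_series b -> ex_series (fun n => a n + b n).
Proof.
  intros Ha Hb. apply (ex_series_ext (fun n => plus (a n) (b n))). intro; reflexivity.
  exact (@ex_series_plus R_AbsRing R_NormedModule a b Ha Hb).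
Qed.

Lemma exp_pow_INR (y : R) (k : nat) : exp y ^ k = exp (INR k * y).
Proof.
  induction k as [|k IH].
  - simpl. rewrite Rmult_0_l, exp_0. reflexivity.
  - rewrite S_INR. simpl pow. rewrite IH.
    replace ((INR k + 1) * y) with (INR k * y + y) by ring.
    rewrite exp_plus. ring.
Qed.

Lemma exp_lower (x : R) : 0 <= x <= 1/2 -> exp (-2 * x) <= 1 - x.
Proof.
  intros Hx.
  assert (H1 := exp_ineq1_le (2 * x)).
  assert (Hp : 0 < exp (2 * x)) by apply exp_pos.
  replace (-2 * x) with (- (2 * x)) by ring. rewrite exp_Ropp.
  apply Rmult_le_reg_l with (exp (2 * x)); auto.
  rewrite Rinv_r by lra. nra.
Qed.

Lemma real_part (w : nat -> R) (K B a : R) :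
  (forall n, 0 < w n) -> 1 <= K ->
  (forall n m, (n <= m)%nat -> w n <= K * w m) -> 1 <= B -> 0 < a < 1 ->
  (forall v, 0 <= v < 1 -> ex_series (fun m => w m * v ^ m)) ->
  (forall r, 0 < r < 1 ->
     Series (fun m => w m * (((a + r) / (1 + a * r)) ^ 2) ^ m)
       <= B * Series (fun m => w m * (r ^ 2) ^ m)) ->
  exists C N0, 0 < C /\ forall n, (N0 <= n)%nat -> w (2 * n)%nat <= C * w n.
Proof.
  intros Hw HK Hinc HB Ha Hex Hker.
  set (al := 2 * B / a).
  assert (Hal : 0 < al) by (unfold al; apply Rdiv_lt_0_compat; lra).
  destruct (INR_unbounded (2 * al)) as [N0 HN0].
  exists (2 * B * K ^ 2 * exp (12 * al)), N0. split.
  { assert (0 < exp (12 * al)) by apply exp_pos. assert (0 < K ^ 2) by (apply pow_lt; lra).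
    apply Rmult_lt_0_compat; [|auto]. apply Rmult_lt_0_compat; lra. }
  intros n Hn.
  assert (HnN : INR N0 <= INR n) by (apply le_INR; exact Hn).
  assert (Hnpos : 0 < INR n) by lra.
  set (x := al / INR n).
  assert (Hx0 : 0 < x) by (unfold x; apply Rdiv_lt_0_compat; lra).
  assert (Hxn : x * INR n = al) by (unfold x; field; lra).
  assert (Hx1 : x <= 1/2).
  { assert (x * INR n <= 1/2 * INR n) by lra. nra. }
  set (r := 1 - x).
  assert (Hr : 0 < r < 1) by (unfold r; lra).
  set (s := (a + r) / (1 + a * r)).
  assert (Hden : 0 < 1 + a * r) by nra.
  assert (Hs1 : s < 1).
  { unfold s. apply Rmult_lt_reg_r with (1 + a * r); auto.
    unfold Rdiv. rewrite Rmult_assoc, Rinv_l by lra. nra. }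
  assert (Hrs : r <= s).
  { unfold s. apply Rmult_le_reg_r with (1 + a * r); auto.
    unfold Rdiv. rewrite Rmult_assoc, Rinv_l by lra.
    assert (r * r <= 1) by nra. assert (a * (r * r) <= a * 1) by nra. nra. }
  set (t := r ^ 2). set (u := s ^ 2).
  assert (Ht : 0 < t < 1) by (unfold t; split; nra).
  assert (Hu : 0 < u < 1) by (unfold u; split; nra).
  assert (Htu : t <= u) by (unfold t, u; nra).
  set (Ft := Series (fun m => w m * t ^ m)).
  set (Fu := Series (fun m => w m * u ^ m)).
  assert (Ext : ex_series (fun m => w m * t ^ m)) by (apply Hex; lra).
  assert (Exu : ex_series (fun m => w m * u ^ m)) by (apply Hex; lra).
  assert (HFuFt : Fu <= B * Ft) by (apply Hker; auto).
  assert (HFt0 : 0 <= Ft).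
  { unfold Ft. rewrite <- (is_series_unique _ _ is_series_zero). apply Series_le; auto.
    intro m. split; [lra|]. assert (0 < w m) by auto. assert (0 < t ^ m) by (apply pow_lt; lra). nra. }
  set (q := r / s).
  assert (Hs0 : 0 < s) by lra.
  assert (Hq : 0 < q <= 1).
  { unfold q. split. apply Rdiv_lt_0_compat; lra.
    apply Rmult_le_reg_r with s; auto. unfold Rdiv. rewrite Rmult_assoc, Rinv_l by lra. lra. }
  assert (Hqax : q <= 1 - a * x).
  { unfold q. apply Rmult_le_reg_r with s; auto. unfold Rdiv. rewrite Rmult_assoc, Rinv_l by lra.
    unfold s. unfold Rdiv.
    apply Rmult_le_reg_r with (1 + a * r); auto.
    rewrite Rmult_1_r. rewrite !Rmult_assoc, Rinv_l by lra. rewrite Rmult_1_r.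
    unfold r. assert (0 <= a * x * (1 - a)) by (apply Rmult_le_pos; nra). nra. }
  assert (Htq : t = q ^ 2 * u).
  { unfold t, u, q. field. lra. }
  set (rho := (q ^ 2) ^ n).
  assert (Hrho0 : 0 <= rho) by (unfold rho; apply pow_le; nra).
  assert (Hrho : rho * B <= 1/2).
  { assert (H1 : rho <= (1 - a * x) ^ n).
    { unfold rho. apply pow_incr. split; nra. }
    assert (H2 : 1 + INR n * (a * x) <= (1 + a * x) ^ n) by (apply Rle_pow_lin; nra).
    assert (H3 : (1 - a * x) ^ n * (1 + a * x) ^ n <= 1).
    { rewrite <- Rpow_mult_distr. apply Rle_trans with (1 ^ n); [|rewrite pow1; lra]. apply pow_incr. assert (0 < a * x) by nra. assert (a * x < 1) by nra. split; nra. }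
    assert (H4 : INR n * (a * x) = 2 * B).
    { replace (INR n * (a * x)) with (a * (x * INR n)) by ring. rewrite Hxn. unfold al. field. lra. }
    assert (H5 : 0 <= (1 - a * x) ^ n) by (apply pow_le; nra).
    nra. }
  assert (Hup : Ft <= rho * Fu + INR n * (K * w n)).
  { unfold Ft, Fu. rewrite <- Series_ind, <- Series_scal_l.
    rewrite <- Series_plus; [| apply ex_series_Rscal; exact Exu | apply ex_series_ind].
    apply Series_le.
    2:{ apply ex_series_Rplus. apply ex_series_Rscal; exact Exu. apply ex_series_ind. }
    intro m. assert (Hwm := Hw m).
    assert (0 < t ^ m) by (apply pow_lt; lra).
    assert (0 < u ^ m) by (apply pow_lt; lra).
    split; [nra|].
    destruct (Nat.ltb_spec m n).
    - assert (t ^ m <= 1) by (rewrite <- (pow1 m); apply pow_incr; lra).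
      assert (w m <= K * w n) by (apply Hinc; lia).
      assert (0 <= rho * (w m * u ^ m)) by (apply Rmult_le_pos; [lra| apply Rmult_le_pos; lra]). nra.
    - assert (Hqm : (q ^ 2) ^ m <= rho) by (apply pow_le_mono; [split; nra | lia]).
      assert (Heq : t ^ m = (q ^ 2) ^ m * u ^ m) by (rewrite Htq; apply Rpow_mult_distr).
      rewrite Heq, Rplus_0_r.
      replace (rho * (w m * u ^ m)) with (w m * (rho * u ^ m)) by ring.
      apply Rmult_le_compat_l; [lra|]. apply Rmult_le_compat_r; lra. }
  assert (HFt : Ft <= 2 * (INR n * (K * w n))) by nra.
  set (L := w (2 * n)%nat / K * u ^ (3 * n)).
  assert (Hlow : INR n * L <= Fu).
  { unfold Fu.
    replace (INR n * L) with (INR (3 * n) * L - INR (2 * n) * L) by (rewrite !mult_INR; simpl; ring).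
    rewrite <- !Series_ind. rewrite <- Series_minus by apply ex_series_ind.
    apply Series_le; auto.
    intro m. assert (Hwm := Hw m).
    assert (0 < u ^ m) by (apply pow_lt; lra).
    assert (0 < L) by (unfold L; apply Rmult_lt_0_compat; [apply Rdiv_lt_0_compat; auto; lra | apply pow_lt; lra]).
    destruct (Nat.ltb_spec m (3 * n)); destruct (Nat.ltb_spec m (2 * n)); try lia.
    - split; nra.
    - split; [lra|].
      assert (Hw2 : w (2 * n)%nat <= K * w m) by (apply Hinc; lia).
      assert (Hum : u ^ (3 * n) <= u ^ m) by (apply pow_le_mono; [lra|lia]).
      unfold L. assert (w (2 * n)%nat / K <= w m).
      { apply Rmult_le_reg_l with K; [lra|]. unfold Rdiv. 
        replace (K * (w (2 * n)%nat * / K)) with (w (2 * n)%nat) by (field; lra). lra. }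
      assert (0 <= w (2 * n)%nat / K) by (apply Rlt_le, Rdiv_lt_0_compat; auto; lra).
      assert (0 <= u ^ (3 * n)) by (apply pow_le; lra).
      nra.
    - split; nra. }
  assert (HL : L <= 2 * B * K * w n).
  { assert (INR n * L <= INR n * (2 * B * K * w n)) by nra.
    apply Rmult_le_reg_l with (INR n); auto. }
  assert (Hu3 : exp (- (12 * al)) <= u ^ (3 * n)).
  { assert (Hr6 : r ^ (6 * n) <= u ^ (3 * n)).
    { replace (6 * n)%nat with (2 * (3 * n))%nat by lia. rewrite pow_mult.
      apply pow_incr. split; [apply pow_le; lra| exact Htu]. }
    assert (He : exp (-2 * x) ^ (6 * n) <= r ^ (6 * n)).
    { apply pow_incr. split; [apply Rlt_le, exp_pos|]. unfold r. apply exp_lower; lra. }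
    rewrite exp_pow_INR in He.
    replace (INR (6 * n) * (-2 * x)) with (- (12 * al)) in He.
    - lra.
    - rewrite mult_INR. simpl INR. rewrite <- Hxn. ring. }
  unfold L in HL.
  assert (HE : 0 < exp (12 * al)) by apply exp_pos.
  rewrite exp_Ropp in Hu3.
  assert (Hw2n := Hw (2 * n)%nat).
  assert (w (2 * n)%nat * / exp (12 * al) <= 2 * B * K ^ 2 * w n).
  { assert (w (2 * n)%nat * / exp (12 * al) <= w (2 * n)%nat * u ^ (3 * n)) by nra.
    assert (w (2 * n)%nat * u ^ (3 * n) = K * (w (2 * n)%nat / K * u ^ (3 * n))) by (field; lra).
    nra. }
  apply Rmult_le_reg_r with (/ exp (12 * al)). apply Rinv_0_lt_compat; auto.
  replace (2 * B * K ^ 2 * exp (12 * al) * w n * / exp (12 * al)) with (2 * B * K ^ 2 * w n) by (field; lra).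
  exact H.
Qed.

Lemma sum_n_RtoC (f : nat -> R) (N : nat) :
  @sum_n C_AbelianMonoid (fun k => RtoC (f k)) N = RtoC (sum_n f N).
Proof.
  induction N as [|N IH].
  - rewrite !sum_O. reflexivity.
  - rewrite !sum_Sn. rewrite IH. change (plus (RtoC (sum_n f N)) (RtoC (f (S N))))
      with (Cplus (RtoC (sum_n f N)) (RtoC (f (S N)))).
    rewrite <- RtoC_plus. reflexivity.
Qed.

Lemma is_series_RtoC (f : nat -> R) (l : R) :
  is_series f l -> @is_series C_AbsRing C_NormedModule (fun k => RtoC (f k)) (RtoC l).
Proof.
  intro H. unfold is_series in *.
  apply filterlim_locally. intro eps.
  generalize (proj1 (filterlim_locally _ _) H eps).
  apply filter_imp. intros N HN.
  apply norm_compat1.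
  rewrite sum_n_RtoC.
  change (Cmod (Cminus (RtoC (sum_n f N)) (RtoC l)) < eps).
  unfold Cminus. rewrite <- RtoC_opp, <- RtoC_plus, Cmod_R. exact HN.
Qed.

Lemma Cmod_sum_n (a : nat -> C) (N : nat) :
  Cmod (@sum_n C_AbelianMonoid a N) <= sum_n (fun k => Cmod (a k)) N.
Proof.
  induction N as [|N IH].
  - rewrite !sum_O. lra.
  - rewrite !sum_Sn.
    change (Cmod (Cplus (sum_n a N) (a (S N))) <= sum_n (fun k => Cmod (a k)) N + Cmod (a (S N))).
    eapply Rle_trans; [apply Cmod_triangle|]. lra.
Qed.

Lemma Cmod_series_le (a : nat -> C) (S : C) (L : R) :
  @is_series C_AbsRing C_NormedModule a S -> is_series (fun k => Cmod (a k)) L -> Cmod S <= L.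
Proof.
  intros HS HL.
  assert (H1 : is_lim_seq (fun N => Cmod (@sum_n C_AbelianMonoid a N)) (Cmod S)).
  { unfold is_lim_seq. simpl.
    apply (filterlim_comp _ _ _ (sum_n a) (@norm C_AbsRing C_NormedModule) _ (locally S)).
    exact HS. exact (@filterlim_norm C_AbsRing C_NormedModule S). }
  assert (H2 : is_lim_seq (sum_n (fun k => Cmod (a k))) L) by exact HL.
  generalize (is_lim_seq_le _ _ _ _ (Cmod_sum_n a) H1 H2). simpl. auto.
Qed.

Lemma pow_n_RtoC (x : R) (m : nat) : @pow_n C_Ring (RtoC x) m = RtoC (x ^ m).
Proof.
  induction m as [|m IH].
  - reflexivity.
  - simpl. rewrite IH. change (Cmult (RtoC x) (RtoC (x ^ m)) = RtoC (x * x ^ m)).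
    rewrite <- RtoC_mult. reflexivity.
Qed.

Lemma conv_lemma (beta : nat -> R) :
  (forall n, 0 < beta n) ->
  Rbar_le (Finite 1) (LimInf_seq (fun n : nat => Rpower (beta n) (/ INR n))) ->
  forall v, 0 <= v < 1 -> ex_series (fun m => / beta m * v ^ m).
Proof.
  intros Hb Hli v Hv.
  set (th := (1 + v) / 2).
  assert (Hth : 0 < th < 1) by (unfold th; lra).
  assert (HN : exists N, forall n, (N <= n)%nat -> th < Rpower (beta n) (/ INR n)).
  { destruct (ex_LimInf_seq (fun n : nat => Rpower (beta n) (/ INR n))) as [l Hl].
    rewrite (is_LimInf_seq_unique _ _ Hl) in Hli.
    destruct l as [l| |]; simpl in Hli, Hl.
    - assert (Hp : 0 < l - th) by lra.
      destruct (proj2 (Hl (mkposreal _ Hp))) as [N HN]. exists N. intros n Hn.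
      specialize (HN n Hn). simpl in HN. lra.
    - apply Hl.
    - contradiction. }
  destruct HN as [N HN].
  apply (proj2 (ex_series_incr_n _ (S N))).
  apply (@ex_series_le R_AbsRing R_CompleteNormedModule _ (fun k => (v / th) ^ (S N + k))).
  2:{ apply (proj1 (ex_series_incr_n (fun k => (v / th) ^ k) (S N))).
      apply ex_series_geom. rewrite Rabs_pos_eq.
      - apply Rmult_lt_reg_r with th; [lra|]. assert (v / th * th = v) by (field; lra). unfold th in *. lra.
      - apply Rmult_le_pos; [lra| apply Rlt_le, Rinv_0_lt_compat; lra]. }
  intro k. set (m := (S N + k)%nat).
  change (Rabs (/ beta m * v ^ m) <= (v / th) ^ m).
  assert (Hbm := Hb m).
  assert (Hvm : 0 <= v ^ m) by (apply pow_le; lra).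
  rewrite Rabs_pos_eq by (apply Rmult_le_pos; [apply Rlt_le, Rinv_0_lt_compat|]; lra).
  set (y := Rpower (beta m) (/ INR m)).
  assert (Hy : th < y) by (apply HN; unfold m; lia).
  assert (Hmpos : 0 < INR m) by (apply lt_0_INR; unfold m; lia).
  assert (Hym : y ^ m = beta m).
  { unfold y. rewrite <- Rpower_pow by (apply exp_pos).
    rewrite Rpower_mult. rewrite Rinv_l by lra. apply Rpower_1; auto. }
  assert (Hthm : th ^ m <= beta m) by (rewrite <- Hym; apply pow_incr; lra).
  assert (Hthm0 : 0 < th ^ m) by (apply pow_lt; lra).
  unfold Rdiv. rewrite Rpow_mult_distr, pow_inv.
  rewrite Rmult_comm. apply Rmult_le_compat_l; auto.
  apply Rinv_le_contravar; auto.
Qed.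

Lemma T_map_real (a r : R) : 0 < 1 + a * r ->
  T_map (RtoC a) (RtoC r) = RtoC ((a + r) / (1 + a * r)).
Proof.
  intro H. unfold T_map.
  assert (Hc : Cconj (RtoC a) = RtoC a) by (unfold Cconj, RtoC; simpl; f_equal; ring).
  rewrite Hc. rewrite <- RtoC_mult.
  change (Cplus 1 (RtoC (a * r))) with (Cplus (RtoC 1) (RtoC (a * r))).
  rewrite <- !RtoC_plus. rewrite RtoC_div by lra. reflexivity.
Qed.

Lemma kernel_ineq (beta : nat -> R) (a : R) :
  (forall n, 0 < beta n) -> 0 < a < 1 ->
  (forall v, 0 <= v < 1 -> ex_series (fun m => / beta m * v ^ m)) ->
  bounded_comp beta (RtoC a) ->
  exists B, 1 <= B /\ forall r, 0 < r < 1 ->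
     Series (fun m => / beta m * (((a + r) / (1 + a * r)) ^ 2) ^ m)
       <= B * Series (fun m => / beta m * (r ^ 2) ^ m).
Proof.
  intros Hb Ha Hex [M [HM Hbc]].
  exists (M + 1). split; [lra|]. intros r Hr.
  assert (Hden : 0 < 1 + a * r) by nra.
  set (s := (a + r) / (1 + a * r)).
  assert (Hs : 0 < s < 1).
  { unfold s. split. apply Rdiv_lt_0_compat; lra.
    apply Rmult_lt_reg_r with (1 + a * r); auto.
    assert ((a + r) / (1 + a * r) * (1 + a * r) = a + r) by (field; lra). nra. }
  set (u := s ^ 2). set (t := r ^ 2).
  assert (Hu : 0 <= u < 1) by (unfold u; split; nra).
  assert (Ht : 0 <= t < 1) by (unfold t; split; nra).
  set (Fu := Series (fun m => / beta m * u ^ m)).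
  set (Ft := Series (fun m => / beta m * t ^ m)).
  assert (Exu := Hex u Hu). assert (Ext := Hex t Ht).
  assert (HFu0 : 0 <= Fu).
  { unfold Fu. rewrite <- (is_series_unique _ _ is_series_zero). apply Series_le; auto.
    intro m. split; [lra|]. apply Rmult_le_pos; [apply Rlt_le, Rinv_0_lt_compat; auto| apply pow_le; lra]. }
  set (c := fun m => RtoC (s ^ m * / beta m)).
  assert (Hceq : forall m, Cmod (c m) ^ 2 * beta m = / beta m * u ^ m).
  { intro m. unfold c. rewrite Cmod_R, pow2_abs.
    unfold u. rewrite <- !pow_mult. replace (2 * m)%nat with (m * 2)%nat by lia. rewrite pow_mult.
    assert (Hbm := Hb m). field. lra. }
  assert (Hc : in_H2 beta c).
  { unfold in_H2. apply (ex_series_ext (fun m => / beta m * u ^ m)); [intro m; symmetry; apply Hceq| exact Exu]. }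
  assert (Hnc : H2norm2 beta c = Fu) by (unfold H2norm2, Fu; apply Series_ext; apply Hceq).
  destruct (Hbc c Hc) as [d [Hd [Hpow Hn]]].
  destruct (Hpow (RtoC r)) as [S [H1 H2]].
  { rewrite Cmod_R, Rabs_pos_eq; lra. }
  unfold pseries_C in H1, H2.
  rewrite T_map_real in H1 by lra. fold s in H1.
  assert (Hreal : @is_series C_AbsRing C_NormedModule (fun m => Cmult (c m) (pow_n (RtoC s) m)) (RtoC Fu)).
  { apply (is_series_ext (fun k => RtoC (/ beta k * u ^ k))).
    - intro m. unfold c. rewrite pow_n_RtoC.
      change (RtoC (/ beta m * u ^ m) = Cmult (RtoC (s ^ m * / beta m)) (RtoC (s ^ m))).
      rewrite <- RtoC_mult. f_equal. unfold u. rewrite <- pow_mult.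
      replace (2 * m)%nat with (m + m)%nat by lia. rewrite pow_add. ring.
    - apply is_series_RtoC. apply Series_correct. exact Exu. }
  assert (HS : S = RtoC Fu).
  { unfold is_series in H1, Hreal.
    exact (@filterlim_locally_unique nat C_AbsRing C_NormedModule eventually
       (Proper_StrongProper _ eventually_filter) _ S (RtoC Fu) H1 Hreal). }
  set (lam := / (M + 1)).
  assert (Hlam : 0 < lam) by (unfold lam; apply Rinv_0_lt_compat; lra).
  assert (HlamM : lam * M <= 1).
  { unfold lam. apply Rmult_le_reg_l with (M + 1); [lra|].
    rewrite <- Rmult_assoc, Rinv_r by lra. lra. }
  set (e := fun m => Cmod (d m) * r ^ m).
  set (D := fun m => Cmod (d m) ^ 2 * beta m).
  set (bd := fun m => 1/2 * (lam * D m) + 1/2 * (/ lam * (/ beta m * t ^ m))).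
  assert (Hebd : forall m, 0 <= e m <= bd m).
  { intro m. unfold e, bd, D, t.
    assert (Hbm := Hb m). set (X := Cmod (d m)). set (Y := r ^ m).
    assert (HX : 0 <= X) by apply Cmod_ge_0.
    assert (HY : 0 <= Y) by (apply pow_le; lra).
    split; [nra|].
    rewrite <- pow_mult. replace (2 * m)%nat with (m * 2)%nat by lia. rewrite pow_mult. fold Y.
    assert (Hid : 1/2 * (lam * (X ^ 2 * beta m)) + 1/2 * (/ lam * (/ beta m * Y ^ 2)) - X * Y
              = (lam * beta m * X - Y) ^ 2 / (2 * lam * beta m)) by (field; lra).
    assert (0 <= (lam * beta m * X - Y) ^ 2 / (2 * lam * beta m)).
    { apply Rdiv_le_0_compat. apply pow2_ge_0. nra. }
    lra. }
  assert (ExD : ex_series D) by exact Hd.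
  assert (Exbd : ex_series bd).
  { unfold bd. apply ex_series_Rplus; apply ex_series_Rscal; apply ex_series_Rscal; auto. }
  assert (Exe : ex_series e).
  { apply (@ex_series_le R_AbsRing R_CompleteNormedModule _ bd); auto.
    intro m. change (Rabs (e m) <= bd m). rewrite Rabs_pos_eq; apply Hebd. }
  assert (HSe : Cmod S <= Series e).
  { apply (Cmod_series_le _ _ _ H2).
    apply (is_series_ext e). 2: apply Series_correct, Exe.
    intro m. unfold e. change (Cmod (d m) * r ^ m = Cmod (Cmult (d m) (pow_n (RtoC r) m))).
    rewrite pow_n_RtoC, Cmod_mult, Cmod_R, Rabs_pos_eq; auto. apply pow_le; lra. }
  assert (Hebd2 : Series e <= Series bd) by (apply Series_le; auto).
  assert (Hbdv : Series bd = 1/2 * (lam * H2norm2 beta d) + 1/2 * (/ lam * Ft)).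
  { unfold bd. rewrite Series_plus by (apply ex_series_Rscal; apply ex_series_Rscal; auto).
    rewrite !Series_scal_l. reflexivity. }
  rewrite HS, Cmod_R, Rabs_pos_eq in HSe by auto.
  rewrite Hnc in Hn.
  assert (Hinvl : / lam = M + 1) by (unfold lam; rewrite Rinv_inv; reflexivity).
  rewrite Hinvl in Hbdv.
  assert (lam * H2norm2 beta d <= lam * (M * Fu)) by (apply Rmult_le_compat_l; lra).
  assert (lam * (M * Fu) <= Fu) by (rewrite <- Rmult_assoc; nra).
  fold Fu Ft. lra.
Qed.

Lemma finite_min (beta : nat -> R) : (forall n, 0 < beta n) ->
  forall N, exists d, 0 < d /\ forall n, (n < N)%nat -> beta (2 * n)%nat >= d * beta n.
Proof.
  intros Hb N. induction N as [|N [d [Hd IH]]].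
  - exists 1. split; [lra|]. intros; lia.
  - exists (Rmin d (beta (2 * N)%nat / beta N)). split.
    + apply Rmin_pos; auto. apply Rdiv_lt_0_compat; auto.
    + intros n Hn. assert (Hbn := Hb n).
      destruct (Nat.eq_dec n N) as [->|Hne].
      * assert (Rmin d (beta (2 * N)%nat / beta N) * beta N <= beta (2 * N)%nat / beta N * beta N)
          by (apply Rmult_le_compat_r; [lra| apply Rmin_r]).
        assert (beta (2 * N)%nat / beta N * beta N = beta (2 * N)%nat) by (field; lra). lra.
      * assert (Hlt : (n < N)%nat) by lia. specialize (IH n Hlt).
        assert (Rmin d (beta (2 * N)%nat / beta N) * beta n <= d * beta n)
          by (apply Rmult_le_compat_r; [lra| apply Rmin_l]). lra.
Qed.

Theorem mainTheorem12 (beta : nat -> R) (a : R) :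
  (forall n : nat, 0 < beta n) ->
  ess_decreasing beta ->
  Rbar_le (Finite 1) (LimInf_seq (fun n : nat => Rpower (beta n) (/ INR n))) ->
  0 < a < 1 ->
  bounded_comp beta (RtoC a) ->
  Delta2 beta.
Proof.
  intros Hb [K [HK Hed]] Hli Ha Hbc.
  assert (Hex := conv_lemma beta Hb Hli).
  destruct (kernel_ineq beta a Hb Ha Hex Hbc) as [B [HB Hker]].
  assert (Hinc : forall n m, (n <= m)%nat -> / beta n <= K * / beta m).
  { intros n m Hnm. assert (Hbn := Hb n). assert (Hbm := Hb m). specialize (Hed m n Hnm).
    apply Rmult_le_reg_r with (beta n * beta m). nra.
    replace (/ beta n * (beta n * beta m)) with (beta m) by (field; lra).
    replace (K * / beta m * (beta n * beta m)) with (K * beta n) by (field; lra). lra. }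
  destruct (real_part (fun n => / beta n) K B a) as [C [N0 [HC Hreal]]]; auto.
  { intro n. apply Rinv_0_lt_compat; auto. }
  destruct (finite_min beta Hb N0) as [d0 [Hd0 Hsmall]].
  exists (Rmin (1/2) (Rmin d0 (/ C))). split.
  { split. apply Rmin_pos; [lra| apply Rmin_pos; auto; apply Rinv_0_lt_compat; auto].
    apply Rle_lt_trans with (1/2); [apply Rmin_l|lra]. }
  intro n. assert (Hbn := Hb n). assert (Hb2 := Hb (2 * n)%nat).
  assert (Hm1 : Rmin (1/2) (Rmin d0 (/ C)) <= d0)
    by (eapply Rle_trans; [apply Rmin_r| apply Rmin_l]).
  assert (Hm2 : Rmin (1/2) (Rmin d0 (/ C)) <= / C)
    by (eapply Rle_trans; [apply Rmin_r| apply Rmin_r]).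
  destruct (Nat.lt_ge_cases n N0) as [Hn|Hn].
  - specialize (Hsmall n Hn).
    assert (Rmin (1/2) (Rmin d0 (/ C)) * beta n <= d0 * beta n) by (apply Rmult_le_compat_r; lra). lra.
  - specialize (Hreal n Hn). simpl in Hreal.
    assert (Hc : beta n <= C * beta (2 * n)%nat).
    { apply Rmult_le_reg_r with (/ beta n * / beta (2 * n)%nat).
      apply Rmult_lt_0_compat; apply Rinv_0_lt_compat; auto.
      replace (beta n * (/ beta n * / beta (2 * n)%nat)) with (/ beta (2 * n)%nat) by (field; lra).
      replace (C * beta (2 * n)%nat * (/ beta n * / beta (2 * n)%nat)) with (C * / beta n) by (field; lra).
      exact Hreal. }
    assert (Rmin (1/2) (Rmin d0 (/ C)) * beta n <= / C * beta n) by (apply Rmult_le_compat_r; lra).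
    assert (/ C * beta n <= beta (2 * n)%nat).
    { apply Rmult_le_reg_l with C; auto. rewrite <- Rmult_assoc, Rinv_r by lra. lra. }
    lra.
Qed.
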